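(* Let $\Omega = [a,b)$ be a bounded interval with periodic boundary conditions, let $k \ge 0$ be an integer, let $T_k$ be the space of real-valued trigonometric polynomials on $\Omega$ of degree at most $k$, and let $P$ denote the $L^2(\Omega)$-orthogonal projection onto $T_k$. Let $u \colon I \to T_k$ (with $I$ an open time interval) be a continuously differentiable solution of the Fourier Galerkin semidiscretization of the Benjamin-Bona-Mahony equation \[ \partial_t u = -(\operatorname{I} - \partial_x^2)^{-1} \partial_x P \frac{u^2}{2}. \] Then the mass, momentum, and energy \[ \mathcal{M} = \int_\Omega u \,\mathrm{d}x, \qquad \mathcal{P} = \int_\Omega \Bigl( \tfrac{1}{2} u^2 + \tfrac{1}{2} (u_x)^2 \Bigr) \mathrm{d}x, \qquad \mathcal{E} = \int_\Omega \tfrac{1}{6} u^3 \,\mathrm{d}x \] are constant in time along $u$.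
   Context: $(\operatorname{I} - \partial_x^2)^{-1}$ denotes the inverse of $\operatorname{I} - \partial_x^2$ acting on periodic functions on $\Omega$; it maps $T_k$ to itself. The semidiscretization is an ODE on the finite-dimensional space $T_k$. *)

(* Defs.v *)
From Stdlib Require Import Reals.
From Coquelicot Require Import Coquelicot.
Open Scope R_scope.

Definition trigpoly (L : R) (k : nat) (c d : nat -> R) (x : R) : R :=
  c 0%nat + sum_n_m (fun j => c j * cos (2 * PI * INR j * x / L)
                          + d j * sin (2 * PI * INR j * x / L)) 1 k.

(* f belongs to T_k, the trigonometric polynomials of degree <= k on the
   periodic interval Omega = [a,b) (functions on R, (b-a)-periodic). *)
Definition in_Tk (a b : R) (k : nat) (f : R -> R) : Prop :=
  exists c d : nat -> R, forall x, f x = trigpoly (b - a) k c d x.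

Definition is_L2proj (a b : R) (k : nat) (f p : R -> R) : Prop :=
  in_Tk a b k p /\
  forall g, in_Tk a b k g -> RInt (fun x => (f x - p x) * g x) a b = 0.

Definition in_I (t0 t1 : Rbar) (t : R) : Prop := Rbar_lt t0 t /\ Rbar_lt t t1.

(* u : I -> T_k continuously differentiable: its coordinates in the basis
   1, cos(2 pi j x/L), sin(2 pi j x/L) (j = 1..k) are C^1 on I. *)
Definition C1_in_Tk (a b : R) (k : nat) (t0 t1 : Rbar) (u : R -> R -> R) : Prop :=
  exists c d : nat -> R -> R,
    (forall j, (j <= k)%nat -> forall t, in_I t0 t1 t ->
       ex_derive (c j) t /\ continuous (Derive (c j)) t /\
       ex_derive (d j) t /\ continuous (Derive (d j)) t) /\
    (forall t, in_I t0 t1 t -> forall x,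
       u t x = trigpoly (b - a) k (fun j => c j t) (fun j => d j t) x).

(* u solves  d_t u = -(I - d_x^2)^{-1} d_x P (u^2/2)  on I.
   Writing w = d_t u(t,.) and p = P(u^2/2), this says w is the (unique)
   element of T_k with (I - d_x^2) w = - d_x p. *)
Definition bbm_galerkin_solution (a b : R) (k : nat) (t0 t1 : Rbar)
    (u : R -> R -> R) : Prop :=
  forall t, in_I t0 t1 t ->
    exists p : R -> R,
      is_L2proj a b k (fun x => (u t x) ^ 2 / 2) p /\
      in_Tk a b k (fun x => Derive (fun s => u s x) t) /\
      forall x,
        Derive (fun s => u s x) t
        - Derive_n (fun y => Derive (fun s => u s y) t) 2 x
        = - Derive p x.

Definition mass (a b : R) (v : R -> R) : R := RInt v a b.
Definition momentum (a b : R) (v : R -> R) : R :=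
  RInt (fun x => (v x) ^ 2 / 2 + (Derive v x) ^ 2 / 2) a b.
Definition energy (a b : R) (v : R -> R) : R :=
  RInt (fun x => (v x) ^ 3 / 6) a b.

(* Main.v *)
Require Import Defs.
From Stdlib Require Import Reals Lra Lia.
From Coquelicot Require Import Coquelicot.
Open Scope R_scope.

Ltac req := match goal with |- ?A = ?B => change (@eq R A B) end.


Lemma sum1_0 (F : nat -> R) : sum_n_m F 1 0 = 0.
Proof. apply (sum_n_m_zero F 1 0). lia. Qed.

Lemma sum1_S (F : nat -> R) k : sum_n_m F 1 (S k) = sum_n_m F 1 k + F (S k).
Proof. apply (sum_n_Sm F 1 k). lia. Qed.

Lemma is_derive_val (f : R -> R) x l l' : is_derive f x l -> l = l' -> is_derive f x l'.
Proof. intros H ->; exact H. Qed.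

Lemma is_derive_cst (c x : R) : is_derive (fun _ => c) x 0.
Proof. auto_derive; auto. Qed.

Lemma sum_is_derive (F : nat -> R -> R) (dF : nat -> R) s k :
  (forall j, (1 <= j <= k)%nat -> is_derive (F j) s (dF j)) ->
  is_derive (fun z => sum_n_m (fun j => F j z) 1 k) s (sum_n_m dF 1 k).
Proof.
  induction k as [|k IH]; intros H.
  - apply (is_derive_ext (fun _ => 0)). { intros; now rewrite sum1_0. }
    rewrite sum1_0. apply is_derive_cst.
  - apply (is_derive_ext (fun z => sum_n_m (fun j => F j z) 1 k + F (S k) z)).
    { intros; now rewrite sum1_S. }
    rewrite sum1_S. apply (is_derive_plus (fun z => sum_n_m (fun j => F j z) 1 k) (F (S k))).
    + apply IH. intros j Hj; apply H; lia.
    + apply H; lia.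
Qed.

Lemma sum_cont2d (F : nat -> R -> R -> R) s x k :
  (forall j, (1 <= j <= k)%nat -> continuity_2d_pt (F j) s x) ->
  continuity_2d_pt (fun u v => sum_n_m (fun j => F j u v) 1 k) s x.
Proof.
  induction k as [|k IH]; intros H.
  - apply (continuity_2d_pt_ext (fun _ _ => 0)). { intros; now rewrite sum1_0. }
    apply continuity_2d_pt_const.
  - apply (continuity_2d_pt_ext (fun u v => sum_n_m (fun j => F j u v) 1 k + F (S k) u v)).
    { intros; now rewrite sum1_S. }
    apply continuity_2d_pt_plus.
    + apply IH. intros j Hj; apply H; lia.
    + apply H; lia.
Qed.

Lemma sum_lin (f g : nat -> R) r k :
  sum_n_m (fun j => f j + r * g j) 1 k = sum_n_m f 1 k + r * sum_n_m g 1 k.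
Proof.
  induction k as [|k IH].
  - rewrite !sum1_0. req; ring.
  - rewrite !sum1_S, IH. req; ring.
Qed.

Lemma sum_ext1 (f g : nat -> R) k : (forall j, f j = g j) -> sum_n_m f 1 k = sum_n_m g 1 k.
Proof. intros H. apply sum_n_m_ext_loc. intros; apply H. Qed.

Definition dcc (L : R) (d : nat -> R) (j : nat) : R := 2 * PI * INR j / L * d j.
Definition dcd (L : R) (c : nat -> R) (j : nat) : R := - (2 * PI * INR j / L * c j).

Lemma tp_derive L k c d x :
  is_derive (trigpoly L k c d) x (trigpoly L k (dcc L d) (dcd L c) x).
Proof.
  unfold trigpoly.
  apply (is_derive_val _ _ (0 + sum_n_m (fun j => dcc L d j * cos (2 * PI * INR j * x / L)
                          + dcd L c j * sin (2 * PI * INR j * x / L)) 1 k)).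
  - apply (is_derive_plus (fun _ => c 0%nat)
      (fun z => sum_n_m (fun j => (fun j z => c j * cos (2 * PI * INR j * z / L)
                          + d j * sin (2 * PI * INR j * z / L)) j z) 1 k)).
    + apply is_derive_cst.
    + apply (sum_is_derive (fun j z => c j * cos (2 * PI * INR j * z / L)
                          + d j * sin (2 * PI * INR j * z / L))).
      intros j _. auto_derive; [auto|].
      unfold dcc, dcd, Rdiv. ring.
  - unfold dcc. simpl. unfold Rdiv. ring.
Qed.

Lemma tp_cont L k c d x : continuous (trigpoly L k c d) x.
Proof. apply (@ex_derive_continuous R_AbsRing R_NormedModule). eexists. apply tp_derive. Qed.

Lemma tp_period L k c d x : L <> 0 -> trigpoly L k c d (x + L) = trigpoly L k c d x.
Proof.
  intros HL. unfold trigpoly. f_equal. apply sum_ext1. intros j.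
  replace (2 * PI * INR j * (x + L) / L) with (2 * PI * INR j * x / L + 2 * INR j * PI)
    by (field; exact HL).
  now rewrite cos_period, sin_period.
Qed.

Lemma tp_lin L k c d c' d' r x :
  trigpoly L k (fun j => c j + r * c' j) (fun j => d j + r * d' j) x
  = trigpoly L k c d x + r * trigpoly L k c' d' x.
Proof.
  unfold trigpoly.
  rewrite (sum_ext1 _ (fun j => (c j * cos (2 * PI * INR j * x / L) + d j * sin (2 * PI * INR j * x / L))
     + r * (c' j * cos (2 * PI * INR j * x / L) + d' j * sin (2 * PI * INR j * x / L)))).
  - rewrite sum_lin. ring.
  - intros; ring.
Qed.

Lemma tp_ext L k c d c' d' x : (forall j, c j = c' j) -> (forall j, d j = d' j) ->
  trigpoly L k c d x = trigpoly L k c' d' x.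
Proof.
  intros Hc Hd. unfold trigpoly. rewrite Hc. f_equal. apply sum_ext1. intros j.
  now rewrite Hc, Hd.
Qed.

Lemma Tk_is_derive a b k f x : in_Tk a b k f -> is_derive f x (Derive f x).
Proof.
  intros [c [d H]].
  assert (H1 : is_derive f x (trigpoly (b - a) k (dcc (b - a) d) (dcd (b - a) c) x)).
  { apply (is_derive_ext (trigpoly (b - a) k c d)). { intros; now rewrite H. } apply tp_derive. }
  now rewrite (is_derive_unique _ _ _ H1).
Qed.

Lemma Tk_ex_derive a b k f x : in_Tk a b k f -> ex_derive f x.
Proof. intros H. eexists. apply (Tk_is_derive a b k f x H). Qed.

Lemma Tk_deriv a b k f : in_Tk a b k f -> in_Tk a b k (Derive f).
Proof.
  intros [c [d H]]. exists (dcc (b - a) d), (dcd (b - a) c). intros x.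
  apply is_derive_unique.
  apply (is_derive_ext (trigpoly (b - a) k c d)). { intros; now rewrite H. } apply tp_derive.
Qed.

Lemma Tk_cont a b k f x : in_Tk a b k f -> continuous f x.
Proof. intros H. apply (@ex_derive_continuous R_AbsRing R_NormedModule). eapply Tk_ex_derive; eauto. Qed.

Lemma Tk_per a b k f : a < b -> in_Tk a b k f -> f b = f a.
Proof.
  intros Hab [c [d H]]. rewrite !H.
  replace b with (a + (b - a)) at 2 by ring.
  apply tp_period. lra.
Qed.


Definition CE (f : R -> R) := forall x, continuous f x.

Lemma CE_plus f g : CE f -> CE g -> CE (fun x => f x + g x).
Proof. intros Hf Hg x. exact (continuous_plus f g x (Hf x) (Hg x)). Qed.
Lemma CE_mult f g : CE f -> CE g -> CE (fun x => f x * g x).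
Proof. intros Hf Hg x. exact (continuous_mult f g x (Hf x) (Hg x)). Qed.
Lemma CE_opp f : CE f -> CE (fun x => - f x).
Proof. intros Hf x. exact (continuous_opp f x (Hf x)). Qed.
Lemma CE_const c : CE (fun _ => c).
Proof. intros x. apply continuous_const. Qed.
Lemma CE_minus f g : CE f -> CE g -> CE (fun x => f x - g x).
Proof. intros Hf Hg. apply CE_plus; auto. apply CE_opp; auto. Qed.
Lemma CE_pow f n : CE f -> CE (fun x => f x ^ n).
Proof.
  intros Hf. induction n as [|n IH]; simpl.
  - apply CE_const.
  - apply CE_mult; auto.
Qed.
Lemma CE_div f r : CE f -> CE (fun x => f x / r).
Proof. intros Hf. unfold Rdiv. apply CE_mult; auto. apply CE_const. Qed.

Lemma CE_exRInt f a b : CE f -> ex_RInt f a b.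
Proof. intros H. apply (ex_RInt_continuous (V:=R_CompleteNormedModule)). intros; apply H. Qed.

Lemma int_split f g a b : CE f -> CE g ->
  RInt (fun x => f x + g x) a b = RInt f a b + RInt g a b.
Proof.
  intros Hf Hg. exact (RInt_plus f g a b (CE_exRInt _ _ _ Hf) (CE_exRInt _ _ _ Hg)).
Qed.

Lemma int_zero_deriv (H h : R -> R) a b :
  (forall x, is_derive H x (h x)) -> CE h -> H b = H a -> RInt h a b = 0.
Proof.
  intros Hd Hc Hp. apply is_RInt_unique.
  apply (is_RInt_ext _ _ _ _ _ (fun x _ => eq_refl)).
  replace 0 with (minus (H b) (H a)).
  - apply (is_RInt_derive (V:=R_CompleteNormedModule)); intros; auto.
  - rewrite Hp. unfold minus, plus, opp; simpl. ring.
Qed.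

Lemma key (F H h g : R -> R) a b :
  (forall x, is_derive H x (h x)) -> CE h -> H b = H a -> CE g -> RInt g a b = 0 ->
  (forall x, F x = h x + g x) -> RInt F a b = 0.
Proof.
  intros Hd Hc Hp Hg Hg0 HF.
  rewrite (RInt_ext F (fun x => h x + g x)) by (intros; apply HF).
  rewrite int_split by auto. rewrite Hg0, (int_zero_deriv H h a b) by auto. req; ring.
Qed.

Lemma deriv_int (f df : R -> R -> R) a b t :
  locally t (fun z => forall x, is_derive (fun z => f z x) z (df z x)) ->
  (forall x, continuity_2d_pt df t x) ->
  locally t (fun z => forall x, continuous (f z) x) ->
  is_derive (fun z => RInt (f z) a b) t (RInt (df t) a b).
Proof.
  intros Hd Hc Hf.
  assert (E : RInt (df t) a b = RInt (fun x => Derive (fun u => f u x) t) a b).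
  { apply RInt_ext. intros x _. symmetry. apply is_derive_unique.
    apply (locally_singleton _ _ Hd). }
  rewrite E.
  apply (is_derive_RInt_param f a b t).
  - refine (filter_imp _ _ _ Hd). intros z Hz x _. eexists; apply Hz.
  - intros x _. apply (continuity_2d_pt_ext_loc df).
    + destruct Hd as [eps Heps]. exists eps. intros u v Hu _. symmetry.
      apply is_derive_unique. apply Heps. exact Hu.
    + apply Hc.
  - refine (filter_imp _ _ _ Hf). intros z Hz. apply (ex_RInt_continuous (V:=R_CompleteNormedModule)). intros; apply Hz.
Qed.


Definition TP L k (al be : nat -> R -> R) (s x : R) : R :=
  trigpoly L k (fun j => al j s) (fun j => be j s) x.

Lemma is_derive_mulc (f : R -> R) s l C : is_derive f s l -> is_derive (fun z => f z * C) s (l * C).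
Proof.
  intros H. apply (is_derive_val _ _ (l * C + f s * 0)).
  - apply (is_derive_mult f (fun _ => C)); auto. apply is_derive_cst. intros; apply Rmult_comm.
  - req; ring.
Qed.

Lemma TP_derive L k al be al' be' s x :
  (forall j, (j <= k)%nat -> is_derive (al j) s (al' j) /\ is_derive (be j) s (be' j)) ->
  is_derive (fun z => TP L k al be z x) s (trigpoly L k al' be' x).
Proof.
  intros H. unfold TP, trigpoly.
  apply (is_derive_plus (al 0%nat)
      (fun z => sum_n_m (fun j => (fun j z => al j z * cos (2 * PI * INR j * x / L)
                          + be j z * sin (2 * PI * INR j * x / L)) j z) 1 k)).
  - apply H; lia.
  - apply (sum_is_derive (fun j z => al j z * cos (2 * PI * INR j * x / L)
                          + be j z * sin (2 * PI * INR j * x / L))).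
    intros j Hj. destruct (H j ltac:(lia)) as [H1 H2].
    apply (is_derive_plus (fun z => al j z * cos (2 * PI * INR j * x / L))
                          (fun z => be j z * sin (2 * PI * INR j * x / L)));
    apply is_derive_mulc; auto.
Qed.

Lemma cont2d_fst (g : R -> R) s x : continuous g s -> continuity_2d_pt (fun u v => g u) s x.
Proof.
  intros H. apply (continuity_1d_2d_pt_comp g (fun u v => u)).
  - apply continuity_pt_filterlim. exact H.
  - apply continuity_2d_pt_id1.
Qed.

Lemma cont2d_arg L j s x : continuity_2d_pt (fun u v => 2 * PI * INR j * v / L) s x.
Proof.
  unfold Rdiv. apply (continuity_2d_pt_mult (fun u v => 2 * PI * INR j * v) (fun u v => / L)).
  - apply (continuity_2d_pt_mult (fun u v => 2 * PI * INR j) (fun u v => v)).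
    + apply continuity_2d_pt_const.
    + apply continuity_2d_pt_id2.
  - apply continuity_2d_pt_const.
Qed.

Lemma TP_cont2d L k al be s x :
  (forall j, (j <= k)%nat -> continuous (al j) s /\ continuous (be j) s) ->
  continuity_2d_pt (TP L k al be) s x.
Proof.
  intros H. unfold TP, trigpoly.
  apply (continuity_2d_pt_plus (fun u v => al 0%nat u)
     (fun u v => sum_n_m (fun j => (fun j u v => al j u * cos (2 * PI * INR j * v / L)
                          + be j u * sin (2 * PI * INR j * v / L)) j u v) 1 k)).
  - apply cont2d_fst. apply H; lia.
  - apply sum_cont2d. intros j Hj. destruct (H j ltac:(lia)) as [H1 H2].
    apply (continuity_2d_pt_plus (fun u v => al j u * cos (2 * PI * INR j * v / L))
                                 (fun u v => be j u * sin (2 * PI * INR j * v / L))).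
    + apply (continuity_2d_pt_mult (fun u v => al j u) (fun u v => cos (2 * PI * INR j * v / L))).
      * now apply cont2d_fst.
      * apply (continuity_1d_2d_pt_comp cos (fun u v => 2 * PI * INR j * v / L)).
        -- apply continuity_cos.
        -- apply cont2d_arg.
    + apply (continuity_2d_pt_mult (fun u v => be j u) (fun u v => sin (2 * PI * INR j * v / L))).
      * now apply cont2d_fst.
      * apply (continuity_1d_2d_pt_comp sin (fun u v => 2 * PI * INR j * v / L)).
        -- apply continuity_sin.
        -- apply cont2d_arg.
Qed.


Lemma dplus (f g : R -> R) x a b : is_derive f x a -> is_derive g x b ->
  is_derive (fun y => f y + g y) x (a + b).
Proof. intros. now apply (is_derive_plus f g). Qed.
Lemma dminus (f g : R -> R) x a b : is_derive f x a -> is_derive g x b ->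
  is_derive (fun y => f y - g y) x (a - b).
Proof. intros. now apply (is_derive_minus f g). Qed.
Lemma dmul (f g : R -> R) x a b : is_derive f x a -> is_derive g x b ->
  is_derive (fun y => f y * g y) x (a * g x + f x * b).
Proof. intros. apply (is_derive_mult f g); auto. intros; apply Rmult_comm. Qed.
Lemma dsq (f : R -> R) x a : is_derive f x a -> is_derive (fun y => f y ^ 2 / 2) x (f x * a).
Proof.
  intros H. apply (is_derive_ext (fun y => f y ^ 2 * / 2)). { intros; reflexivity. }
  apply (is_derive_val _ _ ((INR 2 * a * f x ^ Init.Nat.pred 2) * / 2)).
  - apply is_derive_mulc. now apply is_derive_pow.
  - simpl. field.
Qed.
Lemma dcube (f : R -> R) x a : is_derive f x a -> is_derive (fun y => f y ^ 3 / 6) x (f x ^ 2 / 2 * a).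
Proof.
  intros H. apply (is_derive_ext (fun y => f y ^ 3 * / 6)). { intros; reflexivity. }
  apply (is_derive_val _ _ ((INR 3 * a * f x ^ Init.Nat.pred 3) * / 6)).
  - apply is_derive_mulc. now apply is_derive_pow.
  - simpl. field.
Qed.

Lemma I_open t0 t1 t : in_I t0 t1 t -> locally t (in_I t0 t1).
Proof.
  intros [H1 H2].
  apply (filter_and _ _ (open_Rbar_gt' t t0 H1) (open_Rbar_lt' t t1 H2)).
Qed.

Lemma const_I (Phi : R -> R) t0 t1 t s :
  (forall r, in_I t0 t1 r -> is_derive Phi r 0) ->
  in_I t0 t1 t -> in_I t0 t1 s -> Phi t = Phi s.
Proof.
  intros Hd Ht Hs.
  assert (G : forall t s, in_I t0 t1 t -> in_I t0 t1 s -> t < s -> Phi t = Phi s).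
  { clear t s Ht Hs. intros t s [Ht1 Ht2] [Hs1 Hs2] Hts.
    apply (eq_is_derive Phi t s); auto.
    intros r Hr. apply Hd. split.
    - apply (Rbar_lt_le_trans _ t). exact Ht1. simpl; lra.
    - apply (Rbar_le_lt_trans _ s). simpl; lra. exact Hs2. }
  destruct (Rtotal_order t s) as [H|[H|H]].
  - now apply G.
  - now subst.
  - symmetry. now apply G.
Qed.

Lemma cont_cmul (f : R -> R) K s : continuous f s -> continuous (fun z => K * f z) s.
Proof. intros H. exact (continuous_mult (fun _ => K) f s (continuous_const K s) H). Qed.
Lemma cont_opp (f : R -> R) s : continuous f s -> continuous (fun z => - f z) s.
Proof. intros H. exact (continuous_opp f s H). Qed.

Lemma is_derive_cmul (f : R -> R) s l K : is_derive f s l -> is_derive (fun z => K * f z) s (K * l).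
Proof.
  intros H. apply (is_derive_ext (fun z => f z * K)). { intros; apply Rmult_comm. }
  rewrite Rmult_comm. now apply is_derive_mulc.
Qed.
Lemma is_derive_ropp (f : R -> R) s l : is_derive f s l -> is_derive (fun z => - f z) s (- l).
Proof. intros H. now apply (is_derive_opp f). Qed.

Lemma int_scal0 (g : R -> R) r a b : CE g -> RInt g a b = 0 -> RInt (fun x => r * g x) a b = 0.
Proof.
  intros Hc H. assert (E := RInt_scal g a b r). unfold scal in E; simpl in E; unfold mult in E; simpl in E. rewrite E, H. req; ring. now apply CE_exRInt.
Qed.

Ltac tk := solve [repeat apply Tk_deriv; assumption].
Ltac dtac a b k := match goal with
 | |- is_derive (fun y => @?f y - @?g y) _ _ => apply (dminus f g); dtac a b k
 | |- is_derive (fun y => @?f y + @?g y) _ _ => apply (dplus f g); dtac a b k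
 | |- is_derive (fun y => @?f y ^ 3 / 6) _ _ => apply (dcube f); dtac a b k
 | |- is_derive (fun y => @?f y ^ 2 / 2) _ _ => apply (dsq f); dtac a b k
 | |- is_derive (fun y => @?f y * @?g y) _ _ => apply (dmul f g); dtac a b k
 | |- is_derive (fun y => ?F y) _ _ => apply (Tk_is_derive a b k F); tk
 | |- is_derive _ _ _ => apply (Tk_is_derive a b k); tk
 end.
Ltac cetac a b k := match goal with
 | |- CE (fun y => @?f y - @?g y) => apply (CE_minus f g); cetac a b k
 | |- CE (fun y => @?f y + @?g y) => apply (CE_plus f g); cetac a b k
 | |- CE (fun y => @?f y / ?r) => apply (CE_div f r); cetac a b k
 | |- CE (fun y => @?f y ^ ?n) => apply (CE_pow f n); cetac a b k
 | |- CE (fun y => @?f y * @?g y) => apply (CE_mult f g); cetac a b k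
 | |- CE (fun _ => ?c) => apply CE_const
 | |- CE _ => intro; apply (Tk_cont a b k); tk
 end.

Lemma key2 (F H h g : R -> R) r a b :
  (forall x, is_derive H x (h x)) -> CE h -> H b = H a -> CE g -> RInt g a b = 0 ->
  (forall x, F x = h x + r * g x) -> RInt F a b = 0.
Proof.
  intros. apply (key F H h (fun x => r * g x)); auto.
  - apply CE_mult; auto. apply CE_const.
  - now apply int_scal0.
Qed.

Lemma mass_zero a b k (W p : R -> R) : a < b -> in_Tk a b k W -> in_Tk a b k p ->
  (forall x, W x - Derive (Derive W) x = - Derive p x) -> RInt W a b = 0.
Proof.
  intros Hab HW Hp Hrel.
  apply (key2 W (fun x => Derive W x - p x) (fun x => Derive (Derive W) x - Derive p x) (fun _ => 0) 0).
  - intros x. dtac a b k.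
  - cetac a b k.
  - rewrite (Tk_per a b k (Derive W)), (Tk_per a b k p) by (auto; tk). reflexivity.
  - apply CE_const.
  - rewrite RInt_const. unfold scal; simpl; unfold mult; simpl. ring.
  - intros x. specialize (Hrel x). lra.
Qed.

Lemma mom_zero a b k (V W p : R -> R) : a < b -> in_Tk a b k V -> in_Tk a b k W -> in_Tk a b k p ->
  (forall x, W x - Derive (Derive W) x = - Derive p x) ->
  (forall g, in_Tk a b k g -> RInt (fun x => (V x ^ 2 / 2 - p x) * g x) a b = 0) ->
  RInt (fun x => V x * W x + Derive V x * Derive W x) a b = 0.
Proof.
  intros Hab HV HW Hp Hrel Hproj.
  apply (key2 _ (fun x => V x * Derive W x - V x * p x + V x ^ 3 / 6)
    (fun x => Derive V x * Derive W x + V x * Derive (Derive W) x - Derive V x * p x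
              - V x * Derive p x + V x ^ 2 / 2 * Derive V x)
    (fun x => (V x ^ 2 / 2 - p x) * Derive V x) (-1)).
  - intros x. eapply is_derive_val. { dtac a b k. } req; field.
  - cetac a b k.
  - rewrite (Tk_per a b k V), (Tk_per a b k (Derive W)), (Tk_per a b k p) by (auto; tk). reflexivity.
  - cetac a b k.
  - apply Hproj. tk.
  - intros x. specialize (Hrel x).
    replace (W x) with (Derive (Derive W) x - Derive p x) by lra. field.
Qed.

Lemma Q_exists a b k (p : R -> R) : a < b -> in_Tk a b k p ->
  exists Q, in_Tk a b k Q /\ forall x, p x = Q x - Derive (Derive Q) x.
Proof.
  intros Hab [cp [dp Hp]].
  pose (cq := fun j => cp j / (1 + (2 * PI * INR j / (b - a)) ^ 2)).
  pose (dq := fun j => dp j / (1 + (2 * PI * INR j / (b - a)) ^ 2)).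
  exists (trigpoly (b - a) k cq dq). split.
  - exists cq, dq. intros; reflexivity.
  - intros x.
    rewrite (Derive_ext (Derive (trigpoly (b - a) k cq dq))
               (trigpoly (b - a) k (dcc (b - a) dq) (dcd (b - a) cq))).
    2:{ intros t. apply is_derive_unique. apply tp_derive. }
    rewrite (is_derive_unique _ _ _ (tp_derive (b - a) k (dcc (b - a) dq) (dcd (b - a) cq) x)).
    replace (trigpoly (b - a) k cq dq x -
      trigpoly (b - a) k (dcc (b - a) (dcd (b - a) cq)) (dcd (b - a) (dcc (b - a) dq)) x)
      with (trigpoly (b - a) k cq dq x +
      (-1) * trigpoly (b - a) k (dcc (b - a) (dcd (b - a) cq)) (dcd (b - a) (dcc (b - a) dq)) x) by ring.
    rewrite <- tp_lin. rewrite Hp. apply tp_ext.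
    + intros j. unfold cq, dcc, dcd.
      assert (0 < 1 + (2 * PI * INR j / (b - a)) ^ 2) by (pose proof (pow2_ge_0 (2 * PI * INR j / (b - a))); lra).
      field. split; [lra|]. assert (0 < (b - a) ^ 2) by (apply pow_lt; lra).
      pose proof (pow2_ge_0 (2 * PI * INR j)). lra.
    + intros j. unfold dq, dcc, dcd.
      assert (0 < 1 + (2 * PI * INR j / (b - a)) ^ 2) by (pose proof (pow2_ge_0 (2 * PI * INR j / (b - a))); lra).
      field. split; [lra|]. assert (0 < (b - a) ^ 2) by (apply pow_lt; lra).
      pose proof (pow2_ge_0 (2 * PI * INR j)). lra.
Qed.

Lemma en_zero a b k (V W p : R -> R) : a < b -> in_Tk a b k V -> in_Tk a b k W -> in_Tk a b k p ->
  (forall x, W x - Derive (Derive W) x = - Derive p x) ->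
  (forall g, in_Tk a b k g -> RInt (fun x => (V x ^ 2 / 2 - p x) * g x) a b = 0) ->
  RInt (fun x => V x ^ 2 / 2 * W x) a b = 0.
Proof.
  intros Hab HV HW Hp Hrel Hproj.
  destruct (Q_exists a b k p Hab Hp) as [Q [HQ HpQ]].
  assert (Hp'Q : forall x, Derive p x = Derive Q x - Derive (Derive (Derive Q)) x).
  { intros x. rewrite (Derive_ext p (fun y => Q y - Derive (Derive Q) y)) by apply HpQ.
    apply Derive_minus; apply (Tk_ex_derive a b k); tk. }
  apply (key2 _ (fun x => Q x * Derive W x - Derive Q x * W x - Q x ^ 2 / 2
                          + Q x * Derive (Derive Q) x - Derive Q x ^ 2 / 2)
    (fun x => Q x * Derive (Derive W) x - Derive (Derive Q) x * W x - Q x * Derive Q x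
              + Q x * Derive (Derive (Derive Q)) x)
    (fun x => (V x ^ 2 / 2 - p x) * W x) 1).
  - intros x. eapply is_derive_val. { dtac a b k. } req; field.
  - cetac a b k.
  - rewrite (Tk_per a b k Q), (Tk_per a b k (Derive W)), (Tk_per a b k W),
      (Tk_per a b k (Derive Q)), (Tk_per a b k (Derive (Derive Q))) by (auto; tk). reflexivity.
  - cetac a b k.
  - apply Hproj. tk.
  - intros x. specialize (Hrel x). rewrite (HpQ x).
    replace (W x) with (Derive (Derive W) x - Derive p x) by lra. rewrite (Hp'Q x). field.
Qed.


Theorem theorem2p1 (a b : R) (k : nat) (t0 t1 : Rbar) (u : R -> R -> R) :
  a < b ->
  Rbar_lt t0 t1 ->
  C1_in_Tk a b k t0 t1 u ->
  bbm_galerkin_solution a b k t0 t1 u ->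
  forall t s, in_I t0 t1 t -> in_I t0 t1 s ->
    mass a b (u t) = mass a b (u s) /\
    momentum a b (u t) = momentum a b (u s) /\
    energy a b (u t) = energy a b (u s).
Proof.
  intros Hab Ht01 [C [D [HC Hu]]] Hbbm t s Ht Hs.
  pose (U := TP (b - a) k C D).
  pose (Ut := TP (b - a) k (fun j z => Derive (C j) z) (fun j z => Derive (D j) z)).
  pose (Ux := TP (b - a) k (fun j z => dcc (b - a) (fun i => D i z) j)
                           (fun j z => dcd (b - a) (fun i => C i z) j)).
  pose (Uxt := TP (b - a) k (fun j z => dcc (b - a) (fun i => Derive (D i) z) j)
                            (fun j z => dcd (b - a) (fun i => Derive (C i) z) j)).
  assert (HUu : forall z, in_I t0 t1 z -> forall x, u z x = U z x).
  { intros z Hz x. exact (Hu z Hz x). }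
  assert (HUx : forall z x, Derive (U z) x = Ux z x).
  { intros z x. apply is_derive_unique. exact (tp_derive (b - a) k (fun j => C j z) (fun j => D j z) x). }
  assert (HUxt : forall z x, Derive (Ut z) x = Uxt z x).
  { intros z x. apply is_derive_unique.
    exact (tp_derive (b - a) k (fun j => Derive (C j) z) (fun j => Derive (D j) z) x). }
  assert (HdC : forall z, in_I t0 t1 z -> forall j, (j <= k)%nat ->
     is_derive (C j) z (Derive (C j) z) /\ is_derive (D j) z (Derive (D j) z)).
  { intros z Hz j Hj. destruct (HC j Hj z Hz) as [H1 [_ [H3 _]]].
    split; now apply Derive_correct. }
  assert (dU : forall z, in_I t0 t1 z -> forall x, is_derive (fun w => U w x) z (Ut z x)).
  { intros z Hz x. apply (TP_derive (b - a) k C D (fun j => Derive (C j) z) (fun j => Derive (D j) z)).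
    now apply HdC. }
  assert (dUx : forall z, in_I t0 t1 z -> forall x, is_derive (fun w => Ux w x) z (Uxt z x)).
  { intros z Hz x.
    apply (TP_derive (b - a) k _ _ (fun j => dcc (b - a) (fun i => Derive (D i) z) j)
                                   (fun j => dcd (b - a) (fun i => Derive (C i) z) j)).
    intros j Hj. destruct (HdC z Hz j Hj) as [H1 H2]. unfold dcc, dcd. split.
    - now apply is_derive_cmul.
    - apply is_derive_ropp. now apply is_derive_cmul. }
  assert (HcC : forall z, in_I t0 t1 z -> forall j, (j <= k)%nat ->
     continuous (C j) z /\ continuous (D j) z /\
     continuous (Derive (C j)) z /\ continuous (Derive (D j)) z).
  { intros z Hz j Hj. destruct (HC j Hj z Hz) as [H1 [H2 [H3 H4]]].
    repeat split; auto; apply (@ex_derive_continuous R_AbsRing R_NormedModule); auto. }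
  assert (cU : forall z, in_I t0 t1 z -> forall x, continuity_2d_pt U z x).
  { intros z Hz x. apply TP_cont2d. intros j Hj. destruct (HcC z Hz j Hj) as [H1 [H2 _]]. auto. }
  assert (cUt : forall z, in_I t0 t1 z -> forall x, continuity_2d_pt Ut z x).
  { intros z Hz x. apply TP_cont2d. intros j Hj. destruct (HcC z Hz j Hj) as [_ [_ [H1 H2]]]. auto. }
  assert (cUx : forall z, in_I t0 t1 z -> forall x, continuity_2d_pt Ux z x).
  { intros z Hz x. apply TP_cont2d. intros j Hj. destruct (HcC z Hz j Hj) as [H1 [H2 _]].
    unfold dcc, dcd. split.
    - now apply cont_cmul.
    - apply cont_opp. now apply cont_cmul. }
  assert (cUxt : forall z, in_I t0 t1 z -> forall x, continuity_2d_pt Uxt z x).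
  { intros z Hz x. apply TP_cont2d. intros j Hj. destruct (HcC z Hz j Hj) as [_ [_ [H1 H2]]].
    unfold dcc, dcd. split.
    - now apply cont_cmul.
    - apply cont_opp. now apply cont_cmul. }
  assert (xU : forall z, CE (U z)).
  { intros z x. apply tp_cont. }
  assert (xUx : forall z, CE (Ux z)).
  { intros z x. apply tp_cont. }
  assert (HUTk : forall z, in_Tk a b k (U z)).
  { intros z. eexists; eexists; intros; reflexivity. }
  assert (HUtTk : forall z, in_Tk a b k (Ut z)).
  { intros z. eexists; eexists; intros; reflexivity. }
  assert (Hpde : forall r, in_I t0 t1 r -> exists p, in_Tk a b k p /\
     (forall x, Ut r x - Derive (Derive (Ut r)) x = - Derive p x) /\
     (forall g, in_Tk a b k g -> RInt (fun x => (U r x ^ 2 / 2 - p x) * g x) a b = 0)).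
  { intros r Hr. destruct (Hbbm r Hr) as [p [[HpTk Hproj] [_ Hrel]]].
    assert (Hw : forall x, Derive (fun s => u s x) r = Ut r x).
    { intros x. rewrite (Derive_ext_loc _ (fun s => U s x)).
      - apply is_derive_unique. now apply dU.
      - refine (filter_imp _ _ _ (I_open t0 t1 r Hr)). intros z Hz. now apply HUu. }
    exists p. split; [exact HpTk|split].
    - intros x. specialize (Hrel x). rewrite Hw in Hrel.
      rewrite (Derive_n_ext _ (Ut r) 2 x Hw) in Hrel. exact Hrel.
    - intros g Hg. rewrite <- (Hproj g Hg). apply RInt_ext. intros x _. now rewrite HUu. }
  assert (Hloc : forall r, in_I t0 t1 r -> locally r (in_I t0 t1)) by apply I_open.
  refine (conj _ (conj _ _)).
  -
    apply (const_I (fun z => mass a b (u z)) t0 t1 t s); auto. intros r Hr.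
    destruct (Hpde r Hr) as [p [HpTk [Hrel Hproj]]].
    apply (is_derive_ext_loc (fun z => RInt (U z) a b)).
    { refine (filter_imp _ _ _ (Hloc r Hr)). intros z Hz. unfold mass.
      apply RInt_ext. intros x _. now rewrite HUu. }
    apply (is_derive_val _ _ (RInt (Ut r) a b)).
    + apply (deriv_int U Ut a b r).
      * refine (filter_imp _ _ _ (Hloc r Hr)). intros z Hz. now apply dU.
      * intros x; now apply cUt.
      * apply filter_forall. intros z. apply xU.
    + apply (mass_zero a b k (Ut r) p); auto.
  -
    apply (const_I (fun z => momentum a b (u z)) t0 t1 t s); auto. intros r Hr.
    destruct (Hpde r Hr) as [p [HpTk [Hrel Hproj]]].
    apply (is_derive_ext_loc (fun z => RInt (fun x => U z x ^ 2 / 2 + Ux z x ^ 2 / 2) a b)).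
    { refine (filter_imp _ _ _ (Hloc r Hr)). intros z Hz. unfold momentum.
      apply RInt_ext. intros x _. rewrite HUu by auto.
      rewrite (Derive_ext (u z) (U z)) by (apply HUu; auto). now rewrite HUx. }
    apply (is_derive_val _ _ (RInt (fun x => U r x * Ut r x + Ux r x * Uxt r x) a b)).
    + apply (deriv_int (fun z x => U z x ^ 2 / 2 + Ux z x ^ 2 / 2)
                       (fun z x => U z x * Ut z x + Ux z x * Uxt z x) a b r).
      * refine (filter_imp _ _ _ (Hloc r Hr)). intros z Hz x.
        apply (dplus (fun w => U w x ^ 2 / 2) (fun w => Ux w x ^ 2 / 2)).
        -- apply (dsq (fun w => U w x)). now apply dU.
        -- apply (dsq (fun w => Ux w x)). now apply dUx.
      * intros x. apply continuity_2d_pt_plus; apply continuity_2d_pt_mult; auto.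
      * apply filter_forall. intros z.
        apply (CE_plus (fun x => U z x ^ 2 / 2) (fun x => Ux z x ^ 2 / 2));
          apply CE_div; apply CE_pow; auto.
    + rewrite (RInt_ext _ (fun x => U r x * Ut r x + Derive (U r) x * Derive (Ut r) x)).
      2:{ intros x _. now rewrite HUx, HUxt. }
      apply (mom_zero a b k (U r) (Ut r) p); auto.
  -
    apply (const_I (fun z => energy a b (u z)) t0 t1 t s); auto. intros r Hr.
    destruct (Hpde r Hr) as [p [HpTk [Hrel Hproj]]].
    apply (is_derive_ext_loc (fun z => RInt (fun x => U z x ^ 3 / 6) a b)).
    { refine (filter_imp _ _ _ (Hloc r Hr)). intros z Hz. unfold energy.
      apply RInt_ext. intros x _. now rewrite HUu. }
    apply (is_derive_val _ _ (RInt (fun x => U r x ^ 2 / 2 * Ut r x) a b)).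
    + apply (deriv_int (fun z x => U z x ^ 3 / 6) (fun z x => U z x ^ 2 / 2 * Ut z x) a b r).
      * refine (filter_imp _ _ _ (Hloc r Hr)). intros z Hz x.
        apply (dcube (fun w => U w x)). now apply dU.
      * intros x. apply continuity_2d_pt_mult; auto.
        apply (continuity_2d_pt_ext (fun u v => U u v ^ 2 * / 2)). { intros; reflexivity. }
        apply continuity_2d_pt_mult; [|apply continuity_2d_pt_const].
        apply (continuity_2d_pt_ext (fun u v => U u v * (U u v * 1))). { intros; simpl; reflexivity. }
        apply continuity_2d_pt_mult; auto. apply continuity_2d_pt_mult; auto.
        apply continuity_2d_pt_const.
      * apply filter_forall. intros z. apply CE_div; apply CE_pow; auto.
    + apply (en_zero a b k (U r) (Ut r) p); auto.
Qed.
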